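(* Let $G$, $\delta V$, $\rho$, $G^{BU}$, $U$ and $H=\begin{pmatrix}a&b\\c&d\end{pmatrix}$ (unitary, $abcd\neq0$, $d\in\mathbb{R}$, $\omega=-\det H$) be as in the context, and let $S$ be the scattering matrix of the facial quantum walk on $\mathbb{C}^{\delta V^{BU}}$. The vertex sets $\{x_0(f),\dots,x_{\kappa_f-1}(f)\}$, $f\in F^{ex}$, partition $\delta V^{BU}$. With respect to this partition $S$ is block diagonal, $S=\bigoplus_{f\in F^{ex}}S_f$, where, after identifying $\mathbb{C}^{\{x_0(f),\dots,x_{\kappa_f-1}(f)\}}$ with $\mathbb{C}^{\{0,\dots,\kappa_f-1\}}$ via $x_j(f)\leftrightarrow j$, $$S_f=bc\,P_f(\omega)\bigl(I_f-aP_f(\omega)\bigr)^{-1}+d\,I_f.$$ Here $I_f$ is the identity on $\mathbb{C}^{\{0,\dots,\kappa_f-1\}}$ and $(P_f(\omega)h)(j)=\omega^{\delta_{j-1}(f)}h(j-1)$, with indices taken modulo $\kappa_f$.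
   Context: Setting. $G=(V,E)$ is a finite connected simple graph and $\delta V\subseteq V$ a set of boundary vertices. To each $u\in\delta V$ a semi-infinite path (tail) is attached with origin $u$; let $\tau_u$ be the neighbour of $u$ on its tail. Let $\tilde N_u$ be the set of neighbours of $u$ in $G$, together with $\tau_u$ if $u\in\delta V$. A rotation $\rho=(\rho_u)_{u\in V}$ consists of cyclic permutations $\rho_u$ of $\tilde N_u$ of length $|\tilde N_u|$. Blow-up graph. $V^{BU}=\{(u,v):u\in V,\ v\in\tilde N_u\}$, with arcs $A^{BU}=A_{is}\sqcup A_{br}$: island arcs $(u,v)\to(u,\rho_u(v))$ and bridge arcs $(u,v)\to(v,u)$ for $u,v\in V$ adjacent in $G$. For a bridge arc $e$, $\bar e$ is its reverse. Let $\delta V^{BU}=\{(u,\tau_u):u\in\delta V\}$. To each $x\in\delta V^{BU}$ a tail is attached: incoming arcs $e^x_0,e^x_1,\dots$ with $t(e^x_0)=x$ and $t(e^x_{j+1})=o(e^x_j)$, and their reverses $\bar e^x_j$ (outgoing); $A_{tl}$ is the set of all tail arcs. Each $x\in V^{BU}$ has exactly one incoming and one outgoing island arc, and one further incoming and one further outgoing arc (a bridge and its reverse, or $e^x_0$ and $\bar e^x_0$ if $x\in\delta V^{BU}$). Walk. $U$ acts on $\mathbb{C}^{A^{BU}\cup A_{tl}}$ by $(U\Psi)(e^x_j)=\Psi(e^x_{j+1})$ and $(U\Psi)(\bar e^x_{j+1})=\Psi(\bar e^x_j)$. At every $x\in V^{BU}$, with incoming island arc $e^{is}_+$, other incoming arc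 $e^{br}_+$, outgoing island arc $e^{is}_-$ and other outgoing arc $e^{br}_-$, one has $\bigl((U\Psi)(e^{is}_-),(U\Psi)(e^{br}_-)\bigr)^{T}=H\bigl(\Psi(e^{is}_+),\Psi(e^{br}_+)\bigr)^{T}$. Scattering matrix. Given an inflow $\alpha\in\mathbb{C}^{\delta V^{BU}}$, set $\Psi_0(e^x_j)=\alpha(x)$ for all $x$ and $j$, and $\Psi_0=0$ elsewhere. Then $U^n\Psi_0$ converges pointwise to some $\Psi_\infty$ with $U\Psi_\infty=\Psi_\infty$ (this is a known result). The outflow is $\beta(x)=\Psi_\infty(\bar e^x_0)$. The scattering matrix $S$ is the matrix with $\beta=S\alpha$ for every $\alpha$; its existence is known. Facial walks. Define a bijection $\sigma$ of $A^{BU}$ as follows. A bridge arc $e$ is sent to the island arc starting at $t(e)$. An island arc ending at $x\notin\delta V^{BU}$ is sent to the bridge arc starting at $x$. An island arc ending at $x\in\delta V^{BU}$ is sent to the island arc starting at $x$. The facial closed walks are the cycles of $\sigma$. A facial walk is external if it passes through a vertex of $\delta V^{BU}$, and internal otherwise; $F^{ex}$ and $F^{in}$ denote the corresponding sets. For $f\in F^{ex}$, let $x_0(f),\dots,x_{\kappa_f-1}(f)$ be the vertices of $\delta V^{BU}$ visited by $f$, in cyclic order of traversal. Let $\delta_m(f)$ be the number of bridge arcs traversed by $f$ between $x_m(f)$ and $x_{m+1}(f)$ (indices mod $\kappa_f$). *)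

(* Defs.v *)
From HB Require Import structures.
From mathcomp Require Import all_boot all_order all_algebra.
From mathcomp Require Import fingroup perm.
From mathcomp Require Import complex reals.
Set Implicit Arguments.
Unset Strict Implicit.
Unset Printing Implicit Defensive.
Import Order.TTheory GRing.Theory Num.Theory.
Local Open Scope ring_scope.

Section BlowUp.
Variables (V : finType) (adj : rel V) (dV : {set V}).

Definition simple_connected_graph :=
  [/\ symmetric adj, irreflexive adj & forall x y : V, connect adj x y].

(* Blow-up vertices.  (u, v) with v a G-neighbour of u is an element of BR;
   (u, tau_u) with u in dV is represented by u : BD.  So V^BU = BR + BD and
   delta V^BU = BD. *)
Definition BR := {p : V * V | adj p.1 p.2}.
Definition BD := {u : V | u \in dV}.
Definition BV := (BR + BD)%type.

Definition owner (x : BV) : V :=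
  match x with inl p => (val p).1 | inr u => val u end.

(* (u, v) |-> (v, u)  (default branch never used when adj is symmetric) *)
Definition swap (p : BR) : BR := insubd p ((val p).2, (val p).1).

(* A rotation: a permutation of V^BU acting inside each fibre
   {(u, v) : v in N~_u}, and on each fibre as a single cycle
   (a cyclic permutation of N~_u of length |N~_u|). *)
Definition rotation (rho : {perm BV}) :=
  (forall x, owner (rho x) = owner x) /\
  (forall x y, owner x = owner y -> fconnect rho x y).

(* Arcs of the blow-up graph A^BU = A_is + A_br:
   inl x = island arc  x -> rho x ;  inr p = bridge arc  p -> swap p. *)
Definition barc := (BV + BR)%type.

(* all arcs, including the tails: TIn x j = e^x_j (incoming, t(e^x_0) = x),
   TOut x j = reverse of e^x_j (outgoing). *)
Inductive arc := Ab of barc | TIn of BD & nat | TOut of BD & nat.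

Variable rho : {perm BV}.

Definition sigma (e : barc) : barc :=
  match e with
  | inr p => inl (inl (swap p))
  | inl y => match rho y with inl q => inr q | inr u => inl (inr u) end
  end.

Variable R : realType.
Variables (a b c d : R[i]).

Definition Hmx : 'M[R[i]]_2 :=
  \matrix_(i < 2, j < 2)
    if i == 0 then (if j == 0 then a else b) else (if j == 0 then c else d).

Definition unitary2 (H : 'M[R[i]]_2) :=
  H *m (map_mx (@conjc R) H)^T = 1%:M.

(* the non-island incoming arc at a blow-up vertex *)
Definition in_other (x : BV) : arc :=
  match x with inl p => Ab (inr (swap p)) | inr u => TIn u 0 end.

Definition Uwalk (Psi : arc -> R[i]) : arc -> R[i] := fun e =>
  match e with
  | Ab (inl y) => a * Psi (Ab (inl ((rho^-1)%g y))) + b * Psi (in_other y)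
  | Ab (inr p) => c * Psi (Ab (inl ((rho^-1)%g (inl p)))) + d * Psi (in_other (inl p))
  | TIn u j => Psi (TIn u j.+1)
  | TOut u 0 => c * Psi (Ab (inl ((rho^-1)%g (inr u)))) + d * Psi (in_other (inr u))
  | TOut u j.+1 => Psi (TOut u j)
  end.

Definition Psi0 (alpha : BD -> R[i]) : arc -> R[i] := fun e =>
  match e with TIn u _ => alpha u | _ => 0 end.

Definition outflow_at (alpha : BD -> R[i]) (x : BD) (n : nat) : R[i] :=
  iter n Uwalk (Psi0 alpha) (TOut x 0).

End BlowUp.

Definition cvgC (R : realType) (s : nat -> R[i]) (l : R[i]) :=
  forall e : R, 0 < e -> exists N, forall n, (N <= n)%N -> `|s n - l| < (e%:C)%C.

Section Faces.
Variables (V : finType) (adj : rel V) (dV : {set V}) (rho : {perm BV adj dV}).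

Definition bdIsl (e : barc adj dV) : option (BD dV) :=
  match e with inl (inr u) => Some u | _ => None end.
Definition isBr (e : barc adj dV) : bool := if e is inr _ then true else false.

(* the facial closed walk (a cycle of sigma) starting with the island arc
   leaving the boundary vertex u0 *)
Definition face (u0 : BD dV) : seq (barc adj dV) :=
  orbit (sigma rho) (inl (inr u0)).

(* x_0(f), ..., x_(kappa_f - 1)(f), with x_0(f) = u0, in order of traversal *)
Definition bverts (u0 : BD dV) : seq (BD dV) := pmap bdIsl (face u0).
Definition kappa (u0 : BD dV) : nat := size (bverts u0).

Definition bpos (u0 : BD dV) : seq nat :=
  [seq i <- iota 0 (size (face u0)) | bdIsl (nth (inl (inr u0)) (face u0) i) != None].

(* delta_m(f): number of bridge arcs traversed between x_m and x_(m+1) *)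
Definition delta (u0 : BD dV) (m : nat) : nat :=
  count isBr (drop (nth 0 (bpos u0) m)
                   (take (nth (size (face u0)) (bpos u0) m.+1) (face u0))).

Variable R : realType.

Definition Pf (u0 : BD dV) (om : R[i]) : 'M[R[i]]_(kappa u0) :=
  \matrix_(j, i)
    let jm1 := ((j + (kappa u0).-1) %% kappa u0)%N in
    if (i : nat) == jm1 then om ^+ delta u0 jm1 else 0.

Definition Sf (u0 : BD dV) (a b c d om : R[i]) : 'M[R[i]]_(kappa u0) :=
  (b * c) *: (Pf u0 om *m invmx (1%:M - a *: Pf u0 om)) + d%:M.

End Faces.

(* Main.v *)
Require Import Defs.
From HB Require Import structures.
From mathcomp Require Import all_boot all_order all_algebra.
From mathcomp Require Import fingroup perm.
From mathcomp Require Import complex reals.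
From mathcomp Require Import ring lra zify.
From Stdlib Require Import Classical.
Import Order.TTheory GRing.Theory Num.Theory.
Local Open Scope ring_scope.

Module P1.
Set Implicit Arguments.
Unset Strict Implicit.
Unset Printing Implicit Defensive.

Section Walk.
Variables (R : realType) (V : finType) (adj : rel V) (dV : {set V}).
Variable (rho : {perm BV adj dV}).
Variables (a b c d : R[i]).
Hypothesis adj_sym : symmetric adj.
Local Notation C := R[i].
Local Notation E := (barc adj dV).
Local Notation BVt := (BV adj dV).
Local Notation BRt := (BR adj).
Local Notation BDt := (BD dV).

Lemma swap_val (p : BRt) : val (swap p) = ((val p).2, (val p).1).
Proof.
rewrite /swap insubdK // unfold_in /= adj_sym; exact: (valP p).
Qed.

Lemma swapK : involutive (@swap V adj).
Proof.
move=> p; apply: val_inj; rewrite !swap_val /=; by case: (val p).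
Qed.

Lemma swap_inj : injective (@swap V adj).
Proof. exact: (can_inj swapK). Qed.

Definition inIs (phi : E -> C) (x : BVt) : C := phi (inl ((rho^-1)%g x)).
Definition inBr (phi : E -> C) (al : BDt -> C) (x : BVt) : C :=
  match x with inl p => phi (inr (swap p)) | inr u => al u end.
Definition Fw (phi : E -> C) (al : BDt -> C) (e : E) : C :=
  match e with
  | inl y => a * inIs phi y + b * inBr phi al y
  | inr p => c * inIs phi (inl p) + d * inBr phi al (inl p)
  end.
Definition outw (phi : E -> C) (al : BDt -> C) (u : BDt) : C :=
  c * inIs phi (inr u) + d * al u.

Definition inner (phi psi : E -> C) := \sum_e phi e * (psi e)^*.
Definition innerB (al be : BDt -> C) := \sum_u al u * (be u)^*.

Section Unit.
Hypothesis H1 : a * a^* + c * c^* = 1.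
Hypothesis H2 : b * b^* + d * d^* = 1.
Hypothesis H3 : a * b^* + c * d^* = 0.

Lemma loc_unit (p q p' q' : C) :
  (a * p + b * q) * (a * p' + b * q')^* + (c * p + d * q) * (c * p' + d * q')^*
  = p * p'^* + q * q'^*.
Proof.
have H4 : b * a^* + d * c^* = 0.
  have := congr1 Num.conj H3; rewrite rmorphD !rmorphM /= !conjCK rmorph0 => h.
  by rewrite mulrC [d * _]mulrC h.
rewrite !rmorphD !rmorphM /=.
have -> : (a * p + b * q) * (a^* * p'^* + b^* * q'^*) +
    (c * p + d * q) * (c^* * p'^* + d^* * q'^*) =
  p * p'^* * (a * a^* + c * c^*) + q * q'^* * (b * b^* + d * d^*)
  + p * q'^* * (a * b^* + c * d^*) + q * p'^* * (b * a^* + d * c^*) by ring.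
by rewrite H1 H2 H3 H4 !mulr1 !mulr0 !addr0.
Qed.

Lemma sesqui (phi psi : E -> C) (al be : BDt -> C) :
  inner (Fw phi al) (Fw psi be) + innerB (outw phi al) (outw psi be)
  = inner phi psi + innerB al be.
Proof.
pose IsO := fun (f : E -> C) g (x : BVt) => a * inIs f x + b * inBr f g x.
pose Oth := fun (f : E -> C) g (x : BVt) => c * inIs f x + d * inBr f g x.
have eL : inner (Fw phi al) (Fw psi be) + innerB (outw phi al) (outw psi be)
   = \sum_x (IsO phi al x * (IsO psi be x)^* + Oth phi al x * (Oth psi be x)^*).
  rewrite big_split /= /inner /innerB.
  rewrite [in LHS]big_sumType /= -addrA; congr (_ + _).
  by rewrite [in RHS]big_sumType.
have eR : inner phi psi + innerB al be
   = \sum_x (inIs phi x * (inIs psi x)^* + inBr phi al x * (inBr psi be x)^*).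
  rewrite big_split /= /inner /innerB.
  rewrite [in LHS]big_sumType /= -addrA; congr (_ + _).
    rewrite /inIs [in RHS](reindex_inj (h := rho) (@perm_inj _ rho)) /=.
    by apply: eq_bigr => x _; rewrite permK.
  rewrite [in RHS]big_sumType /=; congr (_ + _).
  rewrite [in RHS](reindex_inj (h := @swap V adj) swap_inj) /=.
  by apply: eq_bigr => x _; rewrite swapK.
rewrite eL eR; apply: eq_bigr => x _; exact: loc_unit.
Qed.

End Unit.
End Walk.

End P1.
Import P1.

Module P2.
Set Implicit Arguments.
Unset Strict Implicit.
Unset Printing Implicit Defensive.

Lemma sq_decay (R : realType) (s : nat -> R) M :
  (forall j, 0 <= s j) -> (forall n, \sum_(j < n) s j <= M) ->
  forall e, 0 < e -> exists N, forall n, (N <= n)%N -> s n < e.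
Proof.
move=> s0 sM e e0.
apply: NNPP => hno.
have big : forall n, exists2 m, (n <= m)%N & e <= s m.
  move=> n; apply: NNPP => h; apply: hno; exists n => m nm.
  rewrite ltNge; apply/negP => hm; apply: h; by exists m.
have mono : forall n k, \sum_(j < n) s j <= \sum_(j < n + k) s j.
  move=> n; elim=> [|k IH]; first by rewrite addn0.
  by rewrite addnS big_ord_recr /= (le_trans IH) // lerDl.
have grow : forall m : nat, exists n, m%:R * e <= \sum_(j < n) s j.
  elim=> [|m [n IH]]; first by exists 0%N; rewrite mul0r big_ord0.
  have [n' nn' en'] := big n.
  exists n'.+1; rewrite big_ord_recr /= mulrSr mulrDl mul1r lerD //.
  by rewrite (le_trans IH) // -(subnKC nn') mono.
have M0 : 0 <= M by rewrite (le_trans _ (sM 0%N)) // big_ord0.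
have [n hn] := grow (Num.Def.archi_bound (M / e)).
have := archi_boundP (divr_ge0 M0 (ltW e0)).
rewrite ltr_pdivrMr // => hb.
have := le_lt_trans (sM n) hb; rewrite ltNge hn //.
Qed.

Section Conv.
Variables (R : realType) (V : finType) (adj : rel V) (dV : {set V}).
Variable (rho : {perm BV adj dV}).
Variables (a b c d : R[i]).
Hypothesis adj_sym : symmetric adj.
Hypothesis H1 : a * a^* + c * c^* = 1.
Hypothesis H2 : b * b^* + d * d^* = 1.
Hypothesis H3 : a * b^* + c * d^* = 0.
Local Notation C := R[i].
Local Notation E := (barc adj dV).
Local Notation BVt := (BV adj dV).
Local Notation BRt := (BR adj).
Local Notation BDt := (BD dV).
Local Notation Fw := (Fw rho a b c d).
Local Notation outw := (outw rho c d).

Definition zerof : BDt -> C := fun _ => 0.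
Definition Tw (phi : E -> C) := Fw phi zerof.
Definition Lw (phi : E -> C) := outw phi zerof.
Definition subf (f g : E -> C) := fun e => f e - g e.

Lemma Fw_sub phi psi al e : Fw phi al e - Fw psi al e = Tw (subf phi psi) e.
Proof.
rewrite /Tw /subf /P1.Fw /inIs /inBr /zerof.
by case: e => [[p|u]|p] /=; ring.
Qed.

Lemma Fw_split phi al e : Fw phi al e = Tw phi e + Fw (fun _ => 0) al e.
Proof.
rewrite /Tw /P1.Fw /inIs /inBr /zerof.
by case: e => [[p|u]|p] /=; ring.
Qed.

Lemma outw_sub phi psi al u : outw phi al u - outw psi al u = Lw (subf phi psi) u.
Proof. rewrite /Lw /subf /P1.outw /inIs /zerof; ring. Qed.

Lemma innerB0 (al : BDt -> C) : innerB al zerof = 0.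
Proof. by rewrite /innerB big1 // => u _; rewrite /zerof rmorph0 mulr0. Qed.

Lemma energy (v : E -> C) : inner (Tw v) (Tw v) + innerB (Lw v) (Lw v) = inner v v.
Proof. by rewrite /Tw /Lw (P1.sesqui rho adj_sym H1 H2 H3) innerB0 addr0. Qed.

Lemma inner_ge0 (v : E -> C) : 0 <= inner v v.
Proof. by apply: sumr_ge0 => e _; rewrite -normCK exprn_ge0. Qed.

Lemma innerB_ge0 (v : BDt -> C) : 0 <= innerB v v.
Proof. by apply: sumr_ge0 => e _; rewrite -normCK exprn_ge0. Qed.

Definition Tn k v := iter k Tw v.

Lemma telescope (v : E -> C) n :
  \sum_(j < n) innerB (Lw (Tn j v)) (Lw (Tn j v)) + inner (Tn n v) (Tn n v)
  = inner v v.
Proof.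
elim: n => [|n IH]; first by rewrite big_ord0 add0r.
by rewrite big_ord_recr /= -addrA [X in _ + X]addrC /Tn energy.
Qed.

Lemma real_ge0_C (z : C) : 0 <= z -> z = ((complex.Re z)%:C)%C.
Proof. by case: z => x y /andP [/eqP /= -> _]. Qed.

Lemma decay (v : E -> C) x (e : R) : 0 < e ->
  exists N, forall n, (N <= n)%N -> `|Lw (Tn n v) x| < (e%:C)%C.
Proof.
move=> e0.
pose s j := complex.Re (innerB (Lw (Tn j v)) (Lw (Tn j v))).
have sE j : innerB (Lw (Tn j v)) (Lw (Tn j v)) = ((s j)%:C)%C.
  exact/real_ge0_C/innerB_ge0.
have s0 j : 0 <= s j by rewrite -lecR -sE innerB_ge0.
have sM n : \sum_(j < n) s j <= complex.Re (inner v v).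
  rewrite -lecR -real_ge0_C ?inner_ge0 // -(telescope v n).
  have -> : (((\sum_(j < n) s j)%:C)%C : C) = \sum_(j < n) ((s j)%:C)%C.
    by rewrite rmorph_sum.
  under eq_bigr do rewrite -sE.
  by rewrite lerDl inner_ge0.
have [N HN] := sq_decay s0 sM (mulr_gt0 e0 e0).
exists N => n /HN hn.
rewrite -(ltr_pXn2r (n := 2)) //; last by rewrite qualifE /= lecR ltW.
  2: by rewrite qualifE /= normr_ge0.
rewrite -ltcR in hn.
have -> : ((e%:C)%C : C) ^+ 2 = (((e * e)%:C)%C : C) by rewrite expr2 rmorphM.
apply: (le_lt_trans _ hn); rewrite -sE /innerB (bigD1 x) //= normCK lerDl.
by apply: sumr_ge0 => u _; rewrite -normCK exprn_ge0.
Qed.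

End Conv.

End P2.
Import P2.

Module P3.
Set Implicit Arguments.
Unset Strict Implicit.
Unset Printing Implicit Defensive.

Section Fred.
Variables (R : realType) (V : finType) (adj : rel V) (dV : {set V}).
Variable (rho : {perm BV adj dV}).
Variables (a b c d : R[i]).
Hypothesis adj_sym : symmetric adj.
Hypothesis H1 : a * a^* + c * c^* = 1.
Hypothesis H2 : b * b^* + d * d^* = 1.
Hypothesis H3 : a * b^* + c * d^* = 0.
Local Notation C := R[i].
Local Notation E := (barc adj dV).
Local Notation BVt := (BV adj dV).
Local Notation BRt := (BR adj).
Local Notation BDt := (BD dV).
Local Notation Fw := (Fw rho a b c d).
Local Notation outw := (outw rho c d).
Local Notation Tw := (Tw rho a b c d).
Local Notation Lw := (Lw rho c d).

Definition rowv (f : E -> C) : 'rV[C]_#|{: E}| := \row_i f (enum_val i).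
Definition delta_ (e' : E) : E -> C := fun e => (e == e')%:R.
Definition Tmx : 'M[C]_#|{: E}| := \matrix_(i, j) Tw (delta_ (enum_val i)) (enum_val j).

Lemma sum_delta (f : E -> C) e1 : \sum_e' f e' * delta_ e' e1 = f e1.
Proof.
rewrite (bigD1 e1) //= /delta_ eqxx mulr1 big1 ?addr0 // => e' ne.
by rewrite eq_sym (negbTE ne) mulr0.
Qed.

Lemma Tw_lin (f : E -> C) e : Tw f e = \sum_e' f e' * Tw (delta_ e') e.
Proof.
rewrite /P2.Tw /P1.Fw /inIs /inBr /zerof.
case: e => [[p|u]|p] /=.
- rewrite (eq_bigr (fun e' => a * (f e' * delta_ e' (inl (rho^-1 (inl p))%g))
     + b * (f e' * delta_ e' (inr (swap p))))); last by move=> e' _; ring.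
  by rewrite big_split /= -!mulr_sumr !sum_delta.
- rewrite (eq_bigr (fun e' => a * (f e' * delta_ e' (inl (rho^-1 (inr u))%g))));
    last by move=> e' _; ring.
  by rewrite -!mulr_sumr !sum_delta; ring.
- rewrite (eq_bigr (fun e' => c * (f e' * delta_ e' (inl (rho^-1 (inl p))%g))
     + d * (f e' * delta_ e' (inr (swap p))))); last by move=> e' _; ring.
  by rewrite big_split /= -!mulr_sumr !sum_delta.
Qed.

Lemma sum_enum (F : E -> C) : \sum_e F e = \sum_(i < #|{: E}|) F (enum_val i).
Proof. by rewrite -big_enum_val. Qed.

Lemma rowT (f : E -> C) : rowv f *m Tmx = rowv (Tw f).
Proof.
apply/rowP => j; rewrite !mxE Tw_lin sum_enum.
by apply: eq_bigr => i _; rewrite !mxE.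
Qed.

Lemma rowv_rank (f : E -> C) e : rowv f 0 (enum_rank e) = f e.
Proof. by rewrite mxE enum_rankK. Qed.

Lemma inner_mx (f : E -> C) (K : 'M[C]_#|{: E}|) k :
  inner f (fun e => (K (enum_rank e) k)^*) = (rowv f *m K) 0 k.
Proof.
rewrite /inner mxE sum_enum; apply: eq_bigr => i _.
by rewrite conjCK enum_valK mxE.
Qed.

Lemma inner_conj (f g : E -> C) : (inner f g)^* = inner g f.
Proof.
rewrite /inner rmorph_sum; apply: eq_bigr => e _.
by rewrite rmorphM /= conjCK mulrC.
Qed.

Lemma inner_eq0 (f : E -> C) : inner f f = 0 -> forall e, f e = 0.
Proof.
move=> h e.
have hp : forall i, predT i -> 0 <= f i * (f i)^*.
  by move=> i _; rewrite -normCK exprn_ge0.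
have := psumr_eq0P hp h (i := e) isT.
by move/eqP; rewrite -normCK expf_eq0 /= normr_eq0 => /eqP.
Qed.

Lemma innerB_eq0 (f : BDt -> C) : innerB f f = 0 -> forall e, f e = 0.
Proof.
move=> h e.
have hp : forall i, predT i -> 0 <= f i * (f i)^*.
  by move=> i _; rewrite -normCK exprn_ge0.
have := psumr_eq0P hp h (i := e) isT.
by move/eqP; rewrite -normCK expf_eq0 /= normr_eq0 => /eqP.
Qed.

Lemma inner_ext (f f' g g' : E -> C) : (forall e, f e = f' e) -> (forall e, g e = g' e) ->
  inner f g = inner f' g'.
Proof. by move=> hf hg; apply: eq_bigr => e _; rewrite hf hg. Qed.

Lemma adj_fixed (z : E -> C) : (forall psi, inner (Tw psi) z = inner psi z) ->
  (forall e, Tw z e = z e) /\ (forall u, Lw z u = 0).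
Proof.
move=> hz.
pose D := subf (Tw z) z.
have eD : inner D D = inner (Tw z) (Tw z) - inner z z.
  have -> : inner D D = inner (Tw z) (Tw z) - inner (Tw z) z - inner z (Tw z)
      + inner z z.
    rewrite /inner -!sumrB -big_split /=; apply: eq_bigr => e _.
    by rewrite /D /subf rmorphB /=; ring.
  rewrite -[inner z (Tw z)]inner_conj hz inner_conj; ring.
have e0 : inner D D + innerB (Lw z) (Lw z) = 0.
  by rewrite eD -(energy rho adj_sym H1 H2 H3 z); ring.
move/eqP: e0; rewrite paddr_eq0 ?inner_ge0 ?innerB_ge0 // => /andP [/eqP hD /eqP hL].
split; last exact: innerB_eq0.
move=> e; have := inner_eq0 hD e; rewrite /D /subf => /eqP; rewrite subr_eq0 => /eqP //.
Qed.

Lemma stationary_exists (al : BDt -> C) : exists phi : E -> C, forall e, Fw phi al e = phi e.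
Proof.
pose w := Fw (fun _ => 0) al.
have hsub : (rowv w <= 1%:M - Tmx)%MS.
  rewrite submxE; apply/eqP/rowP => k; rewrite [RHS]mxE.
  set K := cokermx _.
  have HK : K = Tmx *m K.
    by apply/eqP; have := mulmx_coker (1%:M - Tmx); rewrite mulmxBl mul1mx => /eqP; rewrite subr_eq0.
  pose z := fun e => (K (enum_rank e) k)^*.
  have hz : forall psi, inner (Tw psi) z = inner psi z.
    by move=> psi; rewrite !inner_mx -rowT -mulmxA -HK.
  have [zT zL] := adj_fixed hz.
  rewrite -inner_mx.
  have := P1.sesqui rho adj_sym H1 H2 H3 (fun _ => 0) z al (@zerof R V dV).
  rewrite innerB0.
  have -> : innerB (outw (fun _ => 0) al) (outw z (@zerof R V dV)) = 0.
    rewrite /innerB big1 // => u _.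
    by have := zL u; rewrite /P2.Lw => ->; rewrite rmorph0 mulr0.
  have -> : inner (fun _ => 0) z = 0 by rewrite /inner big1 // => e _; rewrite mul0r.
  rewrite !addr0 => <-; apply: inner_ext => // e; exact: (esym (zT e)).
have [D hD] := submxP hsub.
pose phi := fun e => D 0 (enum_rank e).
have eD : rowv phi = D by apply/rowP => i; rewrite mxE /phi enum_valK.
exists phi => e.
rewrite -eD mulmxBr mulmx1 rowT in hD.
have := congr1 (fun M : 'rV[C]_#|{: E}| => M 0 (enum_rank e)) hD.
rewrite /= !mxE !enum_rankK => hw.
rewrite Fw_split -/w hw; ring.
Qed.

End Fred.

End P3.
Import P3.

Module P4.
Local Open Scope nat_scope.
Set Implicit Arguments.
Unset Strict Implicit.
Unset Printing Implicit Defensive.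

Lemma pmap_map (A B D : Type) (g : B -> option D) (h : A -> B) l :
  pmap g (map h l) = pmap (fun x => g (h x)) l.
Proof. by elim: l => //= x l ->. Qed.

Section Pos.
Variables (T U : eqType) (g : T -> option U) (x0 : T) (y0 : U) (s : seq T).
Definition bp := [seq i <- iota 0 (size s) | g (nth x0 s i) != None].

Lemma bp_map : map Some (pmap g s) = map (fun i => g (nth x0 s i)) bp.
Proof.
have -> : pmap g s = pmap (fun i => g (nth x0 s i)) (iota 0 (size s)).
  by rewrite -[in LHS](mkseq_nth x0 s) /mkseq pmap_map.
rewrite pmapS_filter /bp; congr map; apply: eq_filter => i.
by case: (g _).
Qed.

Lemma bp_size : size bp = size (pmap g s).
Proof. by rewrite -(size_map Some (pmap g s)) bp_map size_map. Qed.

Lemma bp_nth m : m < size bp -> g (nth x0 s (nth 0 bp m)) = Some (nth y0 (pmap g s) m).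
Proof.
move=> hm.
have := congr1 (fun l => nth None l m) bp_map.
by rewrite /= !(nth_map y0) ?(nth_map 0) // -bp_size.
Qed.

Lemma bp_mem k : (k \in bp) = (k < size s) && (g (nth x0 s k) != None).
Proof. by rewrite mem_filter mem_iota add0n andbC. Qed.

Lemma bp_lt m : m < size bp -> nth 0 bp m < size s.
Proof. by move=> hm; have := mem_nth 0 hm; rewrite bp_mem => /andP []. Qed.

Lemma bp_sorted : sorted ltn bp.
Proof. exact: (sorted_filter ltn_trans) (iota_ltn_sorted 0 _). Qed.

Lemma bp_mono m : m < size bp -> nth 0 bp m < nth (size s) bp m.+1.
Proof.
move=> hm; case: (ltnP m.+1 (size bp)) => h.
  rewrite (set_nth_default 0) //.
  by apply: (sorted_ltn_nth ltn_trans 0 bp_sorted) => //.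
by rewrite [nth (size s) _ _]nth_default // bp_lt.
Qed.

Lemma bp_le m : nth (size s) bp m <= size s.
Proof.
case: (ltnP m (size bp)) => h; last by rewrite nth_default.
by rewrite (set_nth_default 0) // ltnW // bp_lt.
Qed.

Lemma bp_gap m k : m < size bp -> nth 0 bp m < k -> k < nth (size s) bp m.+1 ->
  g (nth x0 s k) = None.
Proof.
move=> hm h1 h2.
case E: (g (nth x0 s k)) => [u|] //.
have kin : k \in bp.
  by rewrite bp_mem E andbT (leq_trans h2) // bp_le.
set i := index k bp.
have hi : i < size bp by rewrite index_mem.
have ki : nth 0 bp i = k by rewrite nth_index.
have mono := sorted_ltn_nth ltn_trans 0 bp_sorted.
have mi : m < i.
  rewrite ltnNge; apply/negP => im.
  move: im; rewrite leq_eqVlt => /orP [/eqP eim|im].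
    by move: h1; rewrite -ki eim ltnn.
  have := mono i m hi hm im; rewrite ki => /(ltn_trans h1); by rewrite ltnn.
case: (ltnP m.+1 (size bp)) => hm1.
  have im1 : i < m.+1.
    rewrite ltnNge; apply/negP; rewrite leq_eqVlt => /orP [/eqP eim|im].
      by move: h2; rewrite -ki -eim (set_nth_default 0) // ltnn.
    have := mono m.+1 i hm1 hi im; rewrite ki => /ltn_trans /(_ h2).
    by rewrite (set_nth_default 0) // ltnn.
  by move: im1; rewrite ltnS leqNgt mi.
by move: (leq_trans hi hm1) mi; lia.
Qed.
End Pos.

Local Open Scope ring_scope.

End P4.
Import P4.

Module P5.
Set Implicit Arguments.
Unset Strict Implicit.
Unset Printing Implicit Defensive.

Section FaceComb.
Local Open Scope nat_scope.
Variables (V : finType) (adj : rel V) (dV : {set V}).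
Variable (rho : {perm BV adj dV}).
Local Notation E := (barc adj dV).
Local Notation BDt := (BD dV).
Local Notation sig := (sigma rho).
Hypothesis adj_sym : symmetric adj.

Lemma sigma_inj : injective sig.
Proof.
move=> [y1|p1] [y2|p2]; rewrite /sigma.
- move=> h; f_equal; apply: (@perm_inj _ rho); move: h.
  by case: (rho y1) => [q1|u1]; case: (rho y2) => [q2|u2] // [->].
- by case: (rho y1).
- by case: (rho y2).
- by case=> /(swap_inj adj_sym) ->.
Qed.

Definition e0 (u0 : BDt) : E := inl (inr u0).

Lemma bdIsl_e0 u : bdIsl (e0 u) = Some u. Proof. by []. Qed.

Lemma bdIsl_some e u : bdIsl e = Some u -> e = e0 u.
Proof. by case: e => [[p|v]|p] //= [->]. Qed.

Lemma bdIsl_ocancel : ocancel (@bdIsl V adj dV) e0.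
Proof. by case=> [[p|v]|p]. Qed.

Lemma bdIsl_pcancel : pcancel e0 (@bdIsl V adj dV).
Proof. by []. Qed.

Lemma mem_bverts u0 w : (w \in bverts rho u0) = (e0 w \in face rho u0).
Proof. exact: (can2_mem_pmap bdIsl_ocancel bdIsl_pcancel). Qed.

Lemma face_size u0 : size (face rho u0) = fingraph.order sig (e0 u0).
Proof. by rewrite /face /orbit size_traject. Qed.

Lemma face_nth u0 k : k < size (face rho u0) ->
  nth (e0 u0) (face rho u0) k = iter k sig (e0 u0).
Proof. by rewrite face_size => hk; rewrite /face /orbit nth_traject. Qed.

Lemma face_succ u0 k : k.+1 < size (face rho u0) ->
  sig (nth (e0 u0) (face rho u0) k) = nth (e0 u0) (face rho u0) k.+1.
Proof. by move=> hk; rewrite !face_nth // ltnW. Qed.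

Lemma face_last u0 :
  sig (nth (e0 u0) (face rho u0) (size (face rho u0)).-1) = e0 u0.
Proof.
have h0 := fingraph.order_gt0 sig (e0 u0).
rewrite face_nth; last by rewrite face_size; lia.
rewrite face_size -iterS prednK //; exact: (iter_order sigma_inj).
Qed.

Lemma face_head u0 : face rho u0 = e0 u0 :: behead (face rho u0).
Proof.
rewrite /face /orbit; have := fingraph.order_gt0 sig (e0 u0).
by case: (fingraph.order _ _) => //= n _.
Qed.

Lemma bverts_head u0 : nth u0 (bverts rho u0) 0 = u0.
Proof. by rewrite /bverts face_head. Qed.

Lemma part_props u0 : u0 \in bverts rho u0 /\ uniq (bverts rho u0) /\
     (forall v, v \in bverts rho u0 -> bverts rho v =i bverts rho u0).
Proof.
split; first by rewrite mem_bverts face_head mem_head.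
split; first exact: (pmap_uniq bdIsl_ocancel (orbit_uniq _ _)).
move=> v; rewrite mem_bverts /face -fconnect_orbit => hv w.
rewrite !mem_bverts /face -!fconnect_orbit.
apply/idP/idP => h; first exact: connect_trans hv h.
by apply: connect_trans h; rewrite fconnect_sym //; exact: sigma_inj.
Qed.

Lemma kappa_gt0 u0 : (0 < kappa rho u0)%N.
Proof. by rewrite /kappa /bverts face_head. Qed.

Lemma bpos_bp u0 : bpos rho u0 = bp (@bdIsl V adj dV) (e0 u0) (face rho u0).
Proof. by []. Qed.

Lemma bpos_size u0 : size (bpos rho u0) = kappa rho u0.
Proof. by rewrite bpos_bp bp_size. Qed.

Lemma bpos_pt u0 m : m < kappa rho u0 ->
  nth (e0 u0) (face rho u0) (nth 0 (bpos rho u0) m) = e0 (nth u0 (bverts rho u0) m).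
Proof.
move=> hm; apply: bdIsl_some; rewrite bpos_bp (bp_nth u0) //.
by rewrite -bpos_bp bpos_size.
Qed.

Lemma seg_end u0 m : m < kappa rho u0 ->
  let q := nth (size (face rho u0)) (bpos rho u0) m.+1 in
  sig (nth (e0 u0) (face rho u0) q.-1) =
  e0 (nth u0 (bverts rho u0) (m.+1 %% kappa rho u0)).
Proof.
move=> hm q.
have hmono := @bp_mono _ _ (@bdIsl V adj dV) (e0 u0) (face rho u0).
have hpq : nth 0 (bpos rho u0) m < q by rewrite /q bpos_bp hmono // -bpos_bp bpos_size.
case: (ltnP m.+1 (kappa rho u0)) => h.
  rewrite modn_small // face_succ; last first.
    rewrite prednK; last by lia.
    by rewrite /q (set_nth_default 0) ?bpos_size // bpos_bp bp_lt // -bpos_bp bpos_size.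
  rewrite prednK; last by lia.
  by rewrite /q (set_nth_default 0) ?bpos_size // bpos_pt.
have -> : m.+1 = kappa rho u0 by lia.
rewrite modnn bverts_head /q [nth (size _) _ _]nth_default ?bpos_size //.
exact: face_last.
Qed.

End FaceComb.

End P5.
Import P5.

Module P6.
Set Implicit Arguments.
Unset Strict Implicit.
Unset Printing Implicit Defensive.

Section FaceProp.
Variables (R : realType) (V : finType) (adj : rel V) (dV : {set V}).
Variable (rho : {perm BV adj dV}).
Variables (a b c d om : R[i]).
Hypothesis adj_sym : symmetric adj.
Hypothesis hk : 1 - d ^+ 2 != 0.
Hypothesis hak : a * (1 - d ^+ 2) = - (b * c * d).
Hypothesis hom : om * (1 - d ^+ 2) = b * c.
Local Notation C := R[i].
Local Notation E := (barc adj dV).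
Local Notation BDt := (BD dV).
Local Notation sig := (sigma rho).
Local Notation Fw := (Fw rho a b c d).
Variables (phi : E -> C) (al : BDt -> C).
Hypothesis hstat : forall e, Fw phi al e = phi e.

Definition Rq (e : E) : C :=
  match e with
  | inl y => phi (inl y)
  | inr p => (b / (1 - d ^+ 2)) * (phi (inr p) - d * phi (inr (swap p)))
  end.

Lemma Rq_step e : bdIsl (sig e) = None -> Rq (sig e) = om ^+ (@isBr V adj dV) (sig e) * Rq e.
Proof.
have om_e : om = b * c / (1 - d ^+ 2) by rewrite -hom mulfK.
have a_e : a = - (b * c * d) / (1 - d ^+ 2) by rewrite -hak mulfK.
case: e => [y|p].
  rewrite /sigma; case E1: (rho y) => [q|u] //= _.
  rewrite expr1 -(hstat (inr q)) /P1.Fw /inIs /inBr -E1 permK.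
  rewrite om_e; field; exact: hk.
move=> _; rewrite /= expr0 mul1r.
rewrite -(hstat (inl (inl (swap p)))) -(hstat (inr (swap p))).
rewrite /P1.Fw /inIs /inBr swapK // a_e; field; exact: hk.
Qed.

Lemma sigma_pre e x : sig e = e0 adj x -> e = inl ((rho^-1)%g (inr x)).
Proof.
case: e => [y|p] //=.
case E1: (rho y) => [q|u] //= [<-].
by rewrite -E1 permK.
Qed.

Local Open Scope nat_scope.

Lemma seg_prop u0 m : m < kappa rho u0 ->
  let p := nth 0 (bpos rho u0) m in
  let q := nth (size (face rho u0)) (bpos rho u0) m.+1 in
  forall t, p + t < q ->
  Rq (nth (e0 adj u0) (face rho u0) (p + t)) =
    (om ^+ count (@isBr V adj dV) (drop p (take (p + t).+1 (face rho u0)))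
    * Rq (nth (e0 adj u0) (face rho u0) p))%R.
Proof.
move=> hm p q.
have hpk : p < size (face rho u0).
  by rewrite /p bpos_bp bp_lt // -bpos_bp bpos_size.
have hqs : q <= size (face rho u0) by rewrite /q bpos_bp bp_le.
elim=> [|t IH] hpt.
  rewrite addn0 (take_nth (e0 adj u0)) // drop_rcons; last by rewrite size_takel // ltnW.
  rewrite drop_oversize; last by rewrite size_takel // ltnW.
  by rewrite /= bpos_pt // expr0 mul1r.
have ht : p + t < q by lia.
rewrite addnS -face_succ; last by lia.
rewrite Rq_step; last first.
  rewrite face_succ; last by lia.
  apply: (@bp_gap _ _ (@bdIsl V adj dV) (e0 adj u0) (face rho u0) m) => //.
    by rewrite -bpos_bp bpos_size.
    by rewrite -bpos_bp -/p; lia.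
  by rewrite -bpos_bp -/q; lia.
rewrite IH // face_succ; last by lia.
rewrite [take (p + t).+2 _](take_nth (e0 adj u0)); last by lia.
rewrite drop_rcons; last by rewrite size_takel; lia.
rewrite -cats1 count_cat /= addn0 exprD.
by rewrite GRing.mulrA [(_ ^+ isBr _ * _)%R]GRing.mulrC.
Qed.

Lemma face_rel u0 m : m < kappa rho u0 ->
  inIs rho phi (inr (nth u0 (bverts rho u0) (m.+1 %% kappa rho u0))) =
  (om ^+ delta rho u0 m * (a * inIs rho phi (inr (nth u0 (bverts rho u0) m))
      + b * al (nth u0 (bverts rho u0) m)))%R.
Proof.
move=> hm.
set f := face rho u0.
pose p := nth 0 (bpos rho u0) m.
pose q := nth (size f) (bpos rho u0) m.+1.
have hpq : p < q.
  by rewrite /p /q bpos_bp bp_mono // -bpos_bp bpos_size.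
have := @seg_prop u0 m hm (q.-1 - p); rewrite -/p -/q -/f.
have -> : p + (q.-1 - p) = q.-1 by lia.
move=> /(_ ltac:(lia)).
have -> : q.-1.+1 = q by lia.
rewrite (sigma_pre (seg_end adj_sym hm)) /=.
rewrite /p bpos_pt // /= -(hstat (inl (inr _))) /=.
by [].
Qed.

End FaceProp.

End P6.
Import P6.

Module P7a.
Set Implicit Arguments.
Unset Strict Implicit.
Unset Printing Implicit Defensive.

Section Alg.
Variables (R : realType) (a b c d : R[i]).

Lemma det_Hmx : \det (Hmx a b c d) = a * d - b * c.
Proof.
rewrite (expand_det_row _ 0) !big_ord_recl big_ord0 /cofactor !det_mx11 !mxE /=.
by rewrite !expr0 !expr1; ring.
Qed.

Lemma unit_eqs : unitary2 (Hmx a b c d) ->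
  [/\ a * a^* + c * c^* = 1, b * b^* + d * d^* = 1, a * b^* + c * d^* = 0
    & a * a^* + b * b^* = 1].
Proof.
rewrite /unitary2 => U.
have U' := mulmx1C U.
have e1 := congr1 (fun M : 'M_2 => M 0 0) U.
have e2 := congr1 (fun M : 'M_2 => M 0 0) U'.
have e3 := congr1 (fun M : 'M_2 => M 1 1) U'.
have e4 := congr1 (fun M : 'M_2 => M 1 0) U'.
move: e1 e2 e3 e4; rewrite /= !mxE !big_ord_recl !big_ord0 /= !mxE /= !addr0.
move=> e1 e2 e3 e4.
split.
- by rewrite mulrC [c * _]mulrC; exact: e2.
- by rewrite mulrC [d * _]mulrC; exact: e3.
- by rewrite mulrC [c * _]mulrC; exact: e4.
- exact: e1.
Qed.
End Alg.

End P7a.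
Import P7a.

Module P7b.
Set Implicit Arguments.
Unset Strict Implicit.
Unset Printing Implicit Defensive.

Section Inv.
Variables (R : realType).
Local Notation C := R[i].

Lemma mul_single n (P : 'M[C]_n) (g : 'I_n -> 'I_n) (v : 'cV[C]_n) j :
  (forall i, i != g j -> P j i = 0) -> (P *m v) j 0 = P j (g j) * v (g j) 0.
Proof.
move=> hP; rewrite mxE (bigD1 (g j)) //= big1 ?addr0 // => i hi.
by rewrite hP ?mul0r.
Qed.

Lemma inj_unit n (A : 'M[C]_n) :
  (forall v : 'cV[C]_n, A *m v = 0 -> v = 0) -> A \in unitmx.
Proof.
move=> hA; rewrite -row_full_unit -cokermx_eq0; apply/eqP/matrixP => i k.
set K := cokermx A.
have hK : A *m K = 0 := mulmx_coker A.
pose v := \col_l K l k.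
have : A *m v = 0.
  apply/matrixP => j z.
  transitivity ((A *m K) j k); last by rewrite hK !mxE.
  by rewrite !mxE; apply: eq_bigr => l _; rewrite mxE.
move/hA/matrixP/(_ i 0); by rewrite !mxE.
Qed.

Lemma contr_unit n (P : 'M[C]_n) (g : 'I_n -> 'I_n) (a : C) :
  `|a| < 1 -> (forall j i, i != g j -> P j i = 0) -> (forall j, `|P j (g j)| <= 1) ->
  (1%:M - a *: P) \in unitmx.
Proof.
move=> ha hP hP1; apply: inj_unit => v.
rewrite mulmxBl mul1mx => /eqP; rewrite subr_eq0 => /eqP hv.
apply/matrixP => j k; rewrite (ord1 k) mxE.
case: (@real_arg_maxP _ _ j predT (fun l => `|v l 0|) isT) => [l _|jm _ hmax].
  exact: normr_real.
have hle : forall l, `|v l 0| <= `|v jm 0| by move=> l; exact: hmax.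
have hPv : forall l, `|(P *m v) l 0| <= `|v jm 0|.
  move=> l; rewrite (mul_single _ (hP l)) normrM.
  by rewrite -[X in _ <= X]mul1r ler_pM ?normr_ge0.
have hM : `|v jm 0| <= `|a| * `|v jm 0|.
  have hvj : v jm 0 = a * (P *m v) jm 0.
    by rewrite [LHS](congr1 (fun M : 'cV_n => M jm 0) hv) -scalemxAl [LHS]mxE.
  by rewrite [in X in X <= _]hvj normrM ler_wpM2l ?normr_ge0.
have M0 : `|v jm 0| = 0.
  apply/eqP; rewrite eq_le normr_ge0 andbT.
  have : (1 - `|a|) * `|v jm 0| <= 0 by rewrite mulrBl mul1r subr_le0.
  by rewrite pmulr_rle0 // subr_gt0.
by apply/eqP; rewrite -normr_eq0 eq_le normr_ge0 andbT -M0 hle.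
Qed.
End Inv.

End P7b.
Import P7b.

Module P7c.
Set Implicit Arguments.
Unset Strict Implicit.
Unset Printing Implicit Defensive.

Section WalkConn.
Variables (R : realType) (V : finType) (adj : rel V) (dV : {set V}).
Variable (rho : {perm BV adj dV}).
Variables (a b c d : R[i]).
Hypothesis adj_sym : symmetric adj.
Hypothesis H1 : a * a^* + c * c^* = 1.
Hypothesis H2 : b * b^* + d * d^* = 1.
Hypothesis H3 : a * b^* + c * d^* = 0.
Local Notation C := R[i].
Local Notation E := (barc adj dV).
Local Notation BDt := (BD dV).
Local Notation Fw := (Fw rho a b c d).
Local Notation outw := (outw rho c d).
Local Notation Tw := (Tw rho a b c d).
Local Notation Lw := (Lw rho c d).
Variable al : BDt -> C.

Definition Psi n := iter n (Uwalk rho a b c d) (Psi0 al).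
Definition phin n : E -> C := fun e => Psi n (Ab e).

Lemma Psi_tin n u j : Psi n (@TIn _ adj _ u j) = al u.
Proof. by elim: n j => [|n IH] j //=; rewrite /Psi iterS /= -/(Psi n) IH. Qed.

Lemma phiS n e : phin n.+1 e = Fw (phin n) al e.
Proof.
rewrite /phin /Psi iterS -/(Psi n).
by case: e => [[p|u]|p] //=; rewrite /P1.Fw /inIs /inBr /= Psi_tin.
Qed.

Lemma outS n x : outflow_at rho a b c d al x n.+1 = outw (phin n) al x.
Proof. by rewrite /outflow_at iterS -/(Psi n) /= Psi_tin. Qed.

Lemma Tw_ext (f g : E -> C) e : (forall e, f e = g e) -> Tw f e = Tw g e.
Proof. by move=> h; rewrite /P2.Tw /P1.Fw /inIs /inBr; case: e => [[p|u]|p]; rewrite !h. Qed.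

Lemma Lw_ext (f g : E -> C) x : (forall e, f e = g e) -> Lw f x = Lw g x.
Proof. by move=> h; rewrite /P2.Lw /P1.outw /inIs !h. Qed.

Lemma conv (phi : E -> C) : (forall e, Fw phi al e = phi e) ->
  forall x, cvgC (outflow_at rho a b c d al x) (outw phi al x).
Proof.
move=> hst x.
pose v := subf (phin 0) phi.
have hn : forall n e, phin n e - phi e = Tn rho a b c d n v e.
  elim=> [|n IH] e //.
  rewrite phiS -{1}(hst e) Fw_sub /Tn iterS.
  by apply: Tw_ext => e'; rewrite /subf IH.
move=> eps eps0.
have [N hN] := decay rho adj_sym H1 H2 H3 v x eps0.
exists N.+1 => [[|m]] // hm.
rewrite outS outw_sub.
rewrite (@Lw_ext _ (Tn rho a b c d m v)); first by apply: hN.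
by move=> e; rewrite /subf hn.
Qed.
End WalkConn.

End P7c.
Import P7c.

Module P8.
Set Implicit Arguments.
Unset Strict Implicit.
Unset Printing Implicit Defensive.

Section Final.
Variables (R : realType) (V : finType) (adj : rel V) (dV : {set V}).
Variable (rho : {perm BV adj dV}).
Variables (a b c d om : R[i]).
Hypothesis adj_sym : symmetric adj.
Local Notation C := R[i].
Local Notation BDt := (BD dV).

Definition gP (u0 : BDt) (j : 'I_(kappa rho u0)) :
  ((j + (kappa rho u0).-1) %% kappa rho u0 < kappa rho u0)%N.
Proof. by apply: ltn_pmod; case: (kappa rho u0) j => [[]|]. Qed.

Definition gm (u0 : BDt) (j : 'I_(kappa rho u0)) : 'I_(kappa rho u0) := Ordinal (gP j).

Lemma Pf_off u0 j i : i != gm j -> Pf rho u0 om j i = 0.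
Proof.
move=> hi; rewrite mxE /=; case: ifP => // /eqP h.
by case/eqP: hi; apply: val_inj.
Qed.

Lemma Pf_on u0 j : Pf rho u0 om j (gm j) = om ^+ delta rho u0 (gm j).
Proof. by rewrite mxE /= eqxx. Qed.

Lemma gm_succ u0 (j : 'I_(kappa rho u0)) : ((gm j).+1 %% kappa rho u0)%N = j.
Proof.
rewrite /= -addn1 modnDml -addnA addn1 prednK; last by case: (kappa rho u0) j => [[]|].
by rewrite modnDr modn_small.
Qed.

Hypothesis hk : 1 - d ^+ 2 != 0.
Hypothesis hak : a * (1 - d ^+ 2) = - (b * c * d).
Hypothesis hom : om * (1 - d ^+ 2) = b * c.

Lemma Sf_out u0 (phi : barc adj dV -> C) (al : BDt -> C) :
  (forall e, Fw rho a b c d phi al e = phi e) ->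
  (1%:M - a *: Pf rho u0 om) \in unitmx ->
  forall j : 'I_(kappa rho u0),
  outw rho c d phi al (nth u0 (bverts rho u0) j) =
  \sum_(i < kappa rho u0) Sf rho u0 a b c d om j i * al (nth u0 (bverts rho u0) i).
Proof.
move=> hst hQ j.
set n := kappa rho u0 in j *.
set P := Pf rho u0 om.
set Q := 1%:M - a *: P.
pose h : 'cV[C]_n := \col_j inIs rho phi (inr (nth u0 (bverts rho u0) j)).
pose al' : 'cV[C]_n := \col_i al (nth u0 (bverts rho u0) i).
have hP : h = P *m (a *: h + b *: al').
  apply/matrixP => k z; rewrite (ord1 z).
  rewrite (mul_single _ (fun i (hi : i != gm k) => Pf_off hi)) Pf_on !mxE.
  have := face_rel adj_sym hk hak hom hst (ltn_ord (gm k)).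
  by rewrite gm_succ.
have hQh : Q *m h = b *: (P *m al').
  rewrite /Q mulmxBl mul1mx -scalemxAl {1}hP mulmxDr -!scalemxAr.
  by rewrite addrAC subrr add0r.
have hh : h = invmx Q *m (b *: (P *m al')) by rewrite -hQh mulKmx.
have hcomm : P *m invmx Q = invmx Q *m P.
  have PQ : P *m Q = Q *m P.
    by rewrite /Q mulmxBl mulmxBr mul1mx mulmx1 -scalemxAl -scalemxAr.
  rewrite -[LHS](mulKmx hQ) (mulmxA Q P) -PQ -(mulmxA P Q).
  by rewrite mulmxV // mulmx1.
have hS : Sf rho u0 a b c d om *m al' = c *: h + d *: al'.
  rewrite /Sf mulmxDl mul_scalar_mx -scalemxAl hcomm hh -scalemxAr.
  by rewrite scalerA mulmxA [c * b]mulrC.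
have := congr1 (fun M : 'cV_n => M j 0) hS.
rewrite !mxE => hSj.
have -> : \sum_(i < n) Sf rho u0 a b c d om j i * al (nth u0 (bverts rho u0) i)
   = \sum_(i < n) Sf rho u0 a b c d om j i * al' i 0.
  by apply: eq_bigr => i _; rewrite /al' mxE.
by rewrite hSj /P1.outw.
Qed.
End Final.

End P8.
Import P8.

Unset Implicit Arguments.
Set Strict Implicit.

Theorem mainTheorem2 (R : realType) (V : finType) (adj : rel V) (dV : {set V})
    (rho : {perm BV adj dV}) (a b c d : R[i]) :
  simple_connected_graph adj ->
  rotation rho ->
  unitary2 (Hmx a b c d) ->
  a * b * c * d != 0 ->
  d \is Num.real ->
  let om := - \det (Hmx a b c d) in
  (* the vertex sets of the external facial walks partition delta V^BU *)
  (forall u0 : BD dV, u0 \in bverts rho u0 /\ uniq (bverts rho u0) /\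
     (forall v, v \in bverts rho u0 -> bverts rho v =i bverts rho u0)) /\
  (* I_f - a P_f(om) is invertible *)
  (forall u0 : BD dV, (1%:M - a *: Pf rho u0 om) \in unitmx) /\
  (* the scattering matrix is the direct sum of the S_f *)
  (forall (alpha : BD dV -> R[i]) (u0 : BD dV) (j : 'I_(kappa rho u0)),
     cvgC (outflow_at rho a b c d alpha (nth u0 (bverts rho u0) j))
          (\sum_(i < kappa rho u0)
              Sf rho u0 a b c d om j i * alpha (nth u0 (bverts rho u0) i))).
Proof.
move=> [sym _ _] _ hU habcd hd om.
have [H1 H2 H3 H4] := unit_eqs hU.
move: habcd; rewrite !mulf_eq0 !negb_or => /andP [/andP [/andP [a0 b0] c0] d0].
have dJ : d^* = d := conj_Creal hd.
have ekb : 1 - d ^+ 2 = b * b^* by rewrite -H2 dJ expr2; ring.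
have hk : 1 - d ^+ 2 != 0 by rewrite ekb -normCK expf_neq0 // normr_eq0.
have hab : a * b^* = - (c * d) by rewrite -dJ; apply/eqP; rewrite -addr_eq0 H3.
have hak : a * (1 - d ^+ 2) = - (b * c * d).
  by rewrite ekb; transitivity (b * (a * b^*)); [ring | rewrite hab; ring].
have hom : om * (1 - d ^+ 2) = b * c.
  rewrite /om det_Hmx.
  have -> : - (a * d - b * c) * (1 - d ^+ 2) = b * c - d * (a * (1 - d ^+ 2) + b * c * d)
    by ring.
  by rewrite hak addNr mulr0 subr0.
have ha1 : `|a| < 1.
  rewrite -(expr_lt1 (n := 2)) // normCK.
  have -> : a * a^* = 1 - c * c^* by rewrite -H1; ring.
  by rewrite ltrBlDr ltrDl -normCK exprn_gt0 // normr_gt0.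
have hom1 : `|om| <= 1.
  have omb : om * b^* = c.
    apply: (mulfI b0); rewrite mulrA [b * om]mulrC -mulrA -ekb hom.
    by [].
  have ebc : `|b| = `|c|.
    apply/eqP; rewrite -(eqrXn2 (n := 2)) // ?normr_ge0 // !normCK.
    by apply/eqP; apply: (addrI (a * a^*)); rewrite H4 H1.
  have : `|om| * `|b| = `|b| by rewrite -[in LHS](norm_conjC b) -normrM omb ebc.
  move=> h; suff -> : `|om| = 1 by [].
  apply: (mulIf (x := `|b|)); first by rewrite normr_eq0.
  by rewrite h mul1r.
have hinv : forall u0 : BD dV, (1%:M - a *: Pf rho u0 om) \in unitmx.
  move=> u0; apply: (contr_unit (g := @gm _ _ _ rho u0)) => //.
    by move=> j i hi; exact: Pf_off.
  by move=> j; rewrite Pf_on normrX exprn_ile1 ?normr_ge0.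
split; first by move=> u0; exact: part_props sym u0.
split; first exact: hinv.
move=> al u0 j.
have [phi hst] := stationary_exists rho sym H1 H2 H3 al.
rewrite -(Sf_out sym hk hak hom hst (hinv u0) j).
exact: (conv sym H1 H2 H3 hst).
Qed.
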